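(* Fix positive numbers $l^0_{ij},l^0_{jk},l^0_{ki}$ and let $W^\diamond=\{(w_i,w_j,w_k)\in\mathbb{R}^3: w_r+w_s>-\ln\cosh\frac{l^0_{rs}}{2}\text{ for all }\{r,s\}\subset\{i,j,k\}\}$. For $(w_i,w_j,w_k)\in W^\diamond$ define $l_{ij},l_{jk},l_{ki}>0$ by $\cosh\frac{l_{rs}}{2}=e^{w_r+w_s}\cosh\frac{l^0_{rs}}{2}$, and let $\theta_i,\theta_j,\theta_k$ be the lengths of the sides opposite to the sides of lengths $l_{jk},l_{ki},l_{ij}$, respectively, in the right-angled hyperbolic hexagon whose three pairwise non-adjacent sides have lengths $l_{ij},l_{jk},l_{ki}$. Then the Jacobian matrix $\frac{\partial(\theta_i,\theta_j,\theta_k)}{\partial(w_i,w_j,w_k)}$ is symmetric, strictly diagonally dominant (i.e. for each row $r$, $|\partial\theta_r/\partial w_r|>\sum_{s\ne r}|\partial\theta_r/\partial w_s|$), and negative definite on $W^\diamond$.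
   Context: In a right-angled hyperbolic hexagon with pairwise non-adjacent sides of lengths $l_{ij},l_{jk},l_{ki}$, the opposite side lengths satisfy the cosine law $\cosh\theta_i=\frac{\cosh l_{jk}+\cosh l_{ki}\cosh l_{ij}}{\sinh l_{ki}\sinh l_{ij}}$ (and cyclically), and the sine law $\frac{\sinh\theta_i}{\sinh l_{jk}}=\frac{\sinh\theta_j}{\sinh l_{ki}}=\frac{\sinh\theta_k}{\sinh l_{ij}}$. *)

(* Defs.v *)
From Stdlib Require Import Reals.
From Coquelicot Require Import Coquelicot.
Open Scope R_scope.

(* The three vertices i, j, k of the triangle / the three pairwise
   non-adjacent sides of the right-angled hexagon. *)
Inductive vtx := vi | vj | vk.

Definition vtx_eqb (r s : vtx) : bool :=
  match r, s with
  | vi, vi | vj, vj | vk, vk => true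
  | _, _ => false
  end.

Definition nxt (r : vtx) : vtx := match r with vi => vj | vj => vk | vk => vi end.
Definition prv (r : vtx) : vtx := match r with vi => vk | vj => vi | vk => vj end.

Definition sum3 (f : vtx -> R) : R := f vi + f vj + f vk.

Definition arcosh (x : R) : R := ln (x + sqrt (x * x - 1)).

Definition l0 (lij ljk lki : R) (r s : vtx) : R :=
  match r, s with
  | vi, vj | vj, vi => lij
  | vj, vk | vk, vj => ljk
  | vk, vi | vi, vk => lki
  | _, _ => 0
  end.

Definition Wdiamond (lij ljk lki : R) (w : vtx -> R) : Prop :=
  forall r s : vtx, r <> s ->
    w r + w s > - ln (cosh (l0 lij ljk lki r s / 2)).

Definition len (lij ljk lki : R) (w : vtx -> R) (r s : vtx) : R :=
  2 * arcosh (exp (w r + w s) * cosh (l0 lij ljk lki r s / 2)).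

(* theta_r : length of the side of the right-angled hexagon opposite to the
   side of length l_{st} ({r,s,t} = {i,j,k}), given by the hexagon cosine law
   cosh theta_i = (cosh l_jk + cosh l_ki cosh l_ij) / (sinh l_ki sinh l_ij). *)
Definition theta (lij ljk lki : R) (w : vtx -> R) (r : vtx) : R :=
  let l := len lij ljk lki w in
  let s := nxt r in let t := prv r in
  arcosh ((cosh (l s t) + cosh (l t r) * cosh (l r s))
          / (sinh (l t r) * sinh (l r s))).

Definition upd (w : vtx -> R) (s : vtx) (x : R) : vtx -> R :=
  fun r => if vtx_eqb r s then x else w r.

(* Main.v *)
Require Import Defs.
From Stdlib Require Import Reals Lra Psatz.
From Coquelicot Require Import Coquelicot.
Open Scope R_scope.

Lemma d_val (f : R -> R) (x l l' : R) : is_derive f x l -> l = l' -> is_derive f x l'.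
Proof. intros H ->; exact H. Qed.

Lemma d_comp (f g : R -> R) x df dg : is_derive f (g x) df -> is_derive g x dg ->
  is_derive (fun t => f (g t)) x (dg * df).
Proof. intros; apply (is_derive_comp f g x df dg); auto. Qed.

Lemma d_mult (f g : R -> R) x df dg : is_derive f x df -> is_derive g x dg ->
  is_derive (fun t => f t * g t) x (df * g x + f x * dg).
Proof. intros; apply (is_derive_mult f g x df dg); auto. intros; apply Rmult_comm. Qed.

Lemma d_plus (f g : R -> R) x df dg : is_derive f x df -> is_derive g x dg ->
  is_derive (fun t => f t + g t) x (df + dg).
Proof. intros; apply (is_derive_plus f g x df dg); auto. Qed.

Lemma d_arcosh y : 1 < y -> is_derive arcosh y (/ sqrt (y*y-1)).
Proof.
  intro Hy. unfold arcosh.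
  assert (Hq : 0 < y*y-1) by nra.
  assert (Hs : 0 < sqrt (y*y-1)) by (apply sqrt_lt_R0; lra).
  assert (E : y*y + - (1) = y*y-1) by ring.
  auto_derive; rewrite ?E.
  - repeat split; try lra; try nra.
  - field. split; lra.
Qed.

Lemma d_cosh (x:R) : is_derive cosh x (sinh x).
Proof. unfold cosh, sinh. auto_derive; auto. field. Qed.
Lemma d_sinh (x:R) : is_derive sinh x (cosh x).
Proof. unfold cosh, sinh. auto_derive; auto. field. Qed.

Lemma ch2 (a : R) : 1 <= a ->
  cosh (2 * arcosh a) = 2*a*a - 1 /\ sinh (2*arcosh a) = 2*a*sqrt(a*a-1).
Proof.
  intro Ha. unfold arcosh, cosh, sinh.
  assert (Hq0 : 0 <= a*a-1) by nra.
  set (q := sqrt (a*a-1)).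
  assert (Hq : q*q = a*a-1) by (apply sqrt_sqrt; auto).
  assert (Hq1 : 0 <= q) by apply sqrt_pos.
  assert (Hp : 0 < a + q) by lra.
  assert (E1 : exp (2 * ln (a+q)) = (a+q)*(a+q)).
  { replace (2 * ln (a+q)) with (ln (a+q) + ln (a+q)) by ring.
    rewrite exp_plus, exp_ln; auto. }
  assert (E2 : exp (- (2 * ln (a+q))) = (a-q)*(a-q)).
  { rewrite exp_Ropp, E1. field_simplify_eq. 2: nra.
    nra. }
  rewrite E1, E2. split; nra.
Qed.

Definition ind (a s : vtx) : R := if vtx_eqb a s then 1 else 0.

Lemma upd_same w s r : upd w s (w s) r = w r.
Proof. unfold upd; destruct r, s; reflexivity. Qed.

Lemma d_upd w s a : is_derive (fun x => upd w s x a) (w s) (ind a s).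
Proof.
  unfold upd, ind. destruct (vtx_eqb a s).
  - apply (is_derive_id (K:=R_AbsRing)).
  - apply (is_derive_const (K:=R_AbsRing) (V:=R_NormedModule)).
Qed.

Section Edge.
Variables (lij ljk lki : R) (w : vtx -> R) (a b s : vtx).
Let c := cosh (l0 lij ljk lki a b / 2).
Let K := exp (w a + w b) * c.
Hypothesis HK : 1 < K.

Lemma d_len : is_derive (fun x => len lij ljk lki (upd w s x) a b) (w s)
  (2 * ((ind a s + ind b s) * K / sqrt (K*K-1))).
Proof.
  unfold len. apply is_derive_scal.
  eapply d_val.
  - apply (d_comp arcosh (fun x => exp (upd w s x a + upd w s x b) * c)).
    + cbv beta. rewrite !upd_same. apply d_arcosh. exact HK.
    + apply (d_mult (fun x => exp (upd w s x a + upd w s x b)) (fun _ => c)).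
      * apply (d_comp exp (fun x => upd w s x a + upd w s x b)).
        -- apply is_derive_exp.
        -- apply d_plus; apply d_upd.
      * apply (is_derive_const (K:=R_AbsRing) (V:=R_NormedModule)).
  - cbv beta. rewrite !upd_same. unfold zero; simpl. fold K.
    assert (0 < sqrt (K*K-1)) by (apply sqrt_lt_R0; nra).
    unfold K, Rdiv. apply Rmult_eq_compat_r. ring.
Qed.

Lemma d_clen : is_derive (fun x => cosh (len lij ljk lki (upd w s x) a b)) (w s)
  ((ind a s + ind b s) * (2 * (cosh (len lij ljk lki w a b) + 1))).
Proof.
  eapply d_val.
  - apply (d_comp cosh (fun x => len lij ljk lki (upd w s x) a b)).
    + apply d_cosh.
    + apply d_len.
  - cbv beta. unfold len at 1 2. rewrite !upd_same. fold c. fold K.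
    destruct (ch2 K) as [E1 E2]; [lra|]. rewrite E1, E2.
    field. apply Rgt_not_eq, sqrt_lt_R0. nra.
Qed.

Lemma d_slen : is_derive (fun x => sinh (len lij ljk lki (upd w s x) a b)) (w s)
  (cosh (len lij ljk lki w a b) * ((ind a s + ind b s) * (2 * (cosh (len lij ljk lki w a b) + 1)))
    / sinh (len lij ljk lki w a b)).
Proof.
  eapply d_val.
  - apply (d_comp sinh (fun x => len lij ljk lki (upd w s x) a b)).
    + apply d_sinh.
    + apply d_len.
  - cbv beta. unfold len. rewrite !upd_same. fold c. fold K.
    destruct (ch2 K) as [E1 E2]; [lra|]. rewrite E1, E2.
    assert (0 < sqrt (K*K-1)) by (apply sqrt_lt_R0; nra).
    field. split; lra.
Qed.

Lemma len_props : 1 < cosh (len lij ljk lki w a b) /\ 0 < sinh (len lij ljk lki w a b) /\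
  sinh (len lij ljk lki w a b) * sinh (len lij ljk lki w a b) =
  cosh (len lij ljk lki w a b) * cosh (len lij ljk lki w a b) - 1.
Proof.
  unfold len. fold c. fold K.
  destruct (ch2 K) as [E1 E2]; [lra|]. rewrite E1, E2.
  assert (0 < sqrt (K*K-1)) by (apply sqrt_lt_R0; nra).
  assert (sqrt (K*K-1) * sqrt (K*K-1) = K*K-1) by (apply sqrt_sqrt; nra).
  repeat split; nra.
Qed.
End Edge.

Definition Dl (C1 C2 C3 : R) := C1*C1+C2*C2+C3*C3+2*C1*C2*C3-1.

Lemma d_theta_gen (f1 f2 f3 g2 g3 : R -> R) x0 d1 d2 d3 e2 e3 :
  is_derive f1 x0 d1 -> is_derive f2 x0 d2 -> is_derive f3 x0 d3 ->
  is_derive g2 x0 e2 -> is_derive g3 x0 e3 ->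
  1 < f1 x0 -> 1 < f2 x0 -> 1 < f3 x0 -> 0 < g2 x0 -> 0 < g3 x0 ->
  g2 x0 * g2 x0 = f2 x0 * f2 x0 - 1 -> g3 x0 * g3 x0 = f3 x0 * f3 x0 - 1 ->
  e2 = f2 x0 * d2 / g2 x0 -> e3 = f3 x0 * d3 / g3 x0 ->
  is_derive (fun x => arcosh ((f1 x + f2 x * f3 x) / (g2 x * g3 x))) x0
   ((d1 + d2 * f3 x0 + f2 x0 * d3 - (f1 x0 + f2 x0 * f3 x0) *
      (f2 x0 * d2 / (f2 x0 * f2 x0 - 1) + f3 x0 * d3 / (f3 x0 * f3 x0 - 1)))
     / sqrt (Dl (f1 x0) (f2 x0) (f3 x0))).
Proof.
  intros D1 D2 D3 G2 G3 h1 h2 h3 k2 k3 s2 s3 E2 E3.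
  set (C1 := f1 x0) in *. set (C2 := f2 x0) in *. set (C3 := f3 x0) in *.
  set (S2 := g2 x0) in *. set (S3 := g3 x0) in *.
  assert (HD : 0 < S2 * S3) by nra.
  assert (HCS : S2 * S3 < C2 * C3).
  { assert ((C2*C3 - S2*S3) * (C2*C3 + S2*S3) = C2*C2 + C3*C3 - 1).
    { replace ((C2*C3 - S2*S3) * (C2*C3 + S2*S3)) with
        (C2*C2*(C3*C3) - (S2*S2)*(S3*S3)) by ring. rewrite s2, s3. ring. }
    assert (0 < C2*C3 + S2*S3) by nra.
    destruct (Rlt_or_le (S2*S3) (C2*C3)) as [|Hc]; auto.
    assert ((C2*C3 - S2*S3) * (C2*C3 + S2*S3) <= 0).
    { apply Rmult_le_0_r; lra. }
    nra. }
  assert (Hy : 1 < (C1 + C2*C3) / (S2*S3)).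
  { apply (Rmult_lt_reg_r (S2*S3)); auto. field_simplify; lra. }
  assert (HDl : 0 < Dl C1 C2 C3) by (unfold Dl; nra).
  assert (Hsq : sqrt (((C1 + C2*C3) / (S2*S3)) * ((C1 + C2*C3) / (S2*S3)) - 1)
     = sqrt (Dl C1 C2 C3) / (S2 * S3)).
  { replace (((C1 + C2*C3) / (S2*S3)) * ((C1 + C2*C3) / (S2*S3)) - 1)
      with (Dl C1 C2 C3 / ((S2*S3)*(S2*S3))).
    - rewrite sqrt_div_alt by nra. rewrite sqrt_square by lra. reflexivity.
    - transitivity (((C1 + C2*C3)*(C1 + C2*C3) - (S2*S2)*(S3*S3))/((S2*S2)*(S3*S3))).
      + unfold Dl. replace ((S2*S3)*(S2*S3)) with ((S2*S2)*(S3*S3)) by ring.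
        rewrite s2, s3. field. split; nra.
      + field. split; lra. }
  assert (HsD : 0 < sqrt (Dl C1 C2 C3)) by (apply sqrt_lt_R0; auto).
  eapply d_val.
  - apply (d_comp arcosh (fun x => (f1 x + f2 x * f3 x) / (g2 x * g3 x))).
    + apply d_arcosh. exact Hy.
    + apply is_derive_div.
      * apply d_plus; [exact D1 | apply d_mult; [exact D2 | exact D3]].
      * apply d_mult; [exact G2 | exact G3].
      * fold S2 S3. lra.
  - change (g2 x0) with S2. change (g3 x0) with S3.
    change (f1 x0) with C1. change (f2 x0) with C2. change (f3 x0) with C3.
    rewrite Hsq. rewrite <- s2, <- s3, E2, E3.
    match goal with |- ?a = ?b => change (@eq R a b) end.
    change RinvImpl.Rinv with Rinv.
    change (g2 x0) with S2. change (g3 x0) with S3.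
    change (f1 x0) with C1. change (f2 x0) with C2. change (f3 x0) with C3.
    field. lra.
Qed.

Definition Jd (C1 C2 C3 : R) :=
  -2*((C3+C1*C2)/(C2-1)+(C2+C1*C3)/(C3-1)) / sqrt (Dl C1 C2 C3).
Definition Jo (C1 C2 C3 : R) :=
  2*(C3-1-C1-C2)/(C3-1) / sqrt (Dl C1 C2 C3).

Lemma Dl_rot C1 C2 C3 : Dl C2 C3 C1 = Dl C1 C2 C3.
Proof. unfold Dl; ring. Qed.

Lemma Gd_eq C1 C2 C3 d1 d2 d3 : 1 < C1 -> 1 < C2 -> 1 < C3 ->
  d1 = 0 -> d2 = 2*(C2+1) -> d3 = 2*(C3+1) ->
  (d1 + d2 * C3 + C2 * d3 - (C1 + C2 * C3) *
      (C2 * d2 / (C2 * C2 - 1) + C3 * d3 / (C3 * C3 - 1)))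
     / sqrt (Dl C1 C2 C3) = Jd C1 C2 C3.
Proof.
  intros h1 h2 h3 -> -> ->. unfold Jd. apply (f_equal (fun t => t / sqrt (Dl C1 C2 C3))).
  field. split; nra.
Qed.

Lemma Gn_eq C1 C2 C3 d1 d2 d3 : 1 < C1 -> 1 < C2 -> 1 < C3 ->
  d1 = 2*(C1+1) -> d2 = 0 -> d3 = 2*(C3+1) ->
  (d1 + d2 * C3 + C2 * d3 - (C1 + C2 * C3) *
      (C2 * d2 / (C2 * C2 - 1) + C3 * d3 / (C3 * C3 - 1)))
     / sqrt (Dl C1 C2 C3) = Jo C1 C2 C3.
Proof.
  intros h1 h2 h3 -> -> ->. unfold Jo. apply (f_equal (fun t => t / sqrt (Dl C1 C2 C3))).
  field. split; nra.
Qed.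

Lemma Gp_eq C1 C2 C3 d1 d2 d3 : 1 < C1 -> 1 < C2 -> 1 < C3 ->
  d1 = 2*(C1+1) -> d2 = 2*(C2+1) -> d3 = 0 ->
  (d1 + d2 * C3 + C2 * d3 - (C1 + C2 * C3) *
      (C2 * d2 / (C2 * C2 - 1) + C3 * d3 / (C3 * C3 - 1)))
     / sqrt (Dl C1 C2 C3) = Jo C3 C1 C2.
Proof.
  intros h1 h2 h3 -> -> ->. unfold Jo. rewrite (Dl_rot C2 C3 C1), (Dl_rot C1 C2 C3).
  apply (f_equal (fun t => t / sqrt (Dl C1 C2 C3))).
  field. split; nra.
Qed.

Lemma abs_bound (n m P : R) : 0 < m -> - P < n < P -> Rabs (n / m) < P / m.
Proof.
  intros Hm [h1 h2]. apply Rabs_def1.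
  - apply Rmult_lt_compat_r; [apply Rinv_0_lt_compat; lra | lra].
  - unfold Rdiv. rewrite Ropp_mult_distr_l. apply Rmult_lt_compat_r;
      [apply Rinv_0_lt_compat; lra | lra].
Qed.

Lemma dom C1 C2 C3 : 1 < C1 -> 1 < C2 -> 1 < C3 ->
  Jd C1 C2 C3 < 0 /\ Rabs (Jd C1 C2 C3) > Rabs (Jo C1 C2 C3) + Rabs (Jo C3 C1 C2).
Proof.
  intros h1 h2 h3.
  assert (HD : 0 < sqrt (Dl C1 C2 C3)).
  { apply sqrt_lt_R0; unfold Dl.
    assert (1 < C1*C2) by nra. assert (1 < C1*C2*C3) by nra. nra. }
  set (D := sqrt (Dl C1 C2 C3)) in *.
  unfold Jo, Jd. rewrite (Dl_rot C2 C3 C1), (Dl_rot C1 C2 C3). fold D.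
  set (u1 := (C3-1-C1-C2)/(C3-1)). set (u2 := (C2-1-C3-C1)/(C2-1)).
  set (X1 := (C3+C1*C2)/(C2-1)). set (X2 := (C2+C1*C3)/(C3-1)).
  assert (B1 : Rabs u1 < X2) by (apply abs_bound; [lra| split; nra]).
  assert (B2 : Rabs u2 < X1) by (apply abs_bound; [lra| split; nra]).
  assert (P1 : 0 < X1) by (unfold X1; apply Rdiv_lt_0_compat; nra).
  assert (P2 : 0 < X2) by (unfold X2; apply Rdiv_lt_0_compat; nra).
  assert (E1 : -2*(X1+X2)/D = -((2/D)*(X1+X2))) by (field; lra).
  assert (E2 : 2*(C3-1-C1-C2)/(C3-1)/D = (2/D)*u1) by (unfold u1; field; lra).
  assert (E3 : 2*(C2-1-C3-C1)/(C2-1)/D = (2/D)*u2) by (unfold u2; field; lra).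
  rewrite E1, E2, E3.
  assert (H2D : 0 < 2/D) by (apply Rdiv_lt_0_compat; lra).
  rewrite Rabs_Ropp, !Rabs_mult, (Rabs_right (2/D)) by lra.
  rewrite (Rabs_right (X1+X2)) by lra.
  split; nra.
Qed.

Lemma quad (a b c p q t x y z : R) :
  a + Rabs p + Rabs q < 0 -> b + Rabs p + Rabs t < 0 -> c + Rabs q + Rabs t < 0 ->
  (x <> 0 \/ y <> 0 \/ z <> 0) ->
  x*a*x + x*p*y + x*q*z + (y*p*x + y*b*y + y*t*z) + (z*q*x + z*t*y + z*c*z) < 0.
Proof.
  intros ha hb hc hx.
  assert (K : forall u v w : R, 2*(u*v*w) <= Rabs u * (v*v + w*w)).
  { intros u v w. destruct (Rle_or_lt 0 u).
    - rewrite Rabs_right by lra.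
      assert (0 <= u*((v-w)*(v-w))) by (apply Rmult_le_pos; [lra | apply Rle_0_sqr]). nra.
    - rewrite Rabs_left by lra.
      assert (0 <= (-u)*((v+w)*(v+w))) by (apply Rmult_le_pos; [lra | apply Rle_0_sqr]). nra. }
  pose proof (K p x y). pose proof (K q x z). pose proof (K t y z).
  assert (0 <= x*x) by apply Rle_0_sqr. assert (0 <= y*y) by apply Rle_0_sqr.
  assert (0 <= z*z) by apply Rle_0_sqr.
  assert (x*x*(a + Rabs p + Rabs q) <= 0) by nra.
  assert (y*y*(b + Rabs p + Rabs t) <= 0) by nra.
  assert (z*z*(c + Rabs q + Rabs t) <= 0) by nra.
  destruct hx as [h|[h|h]].
  - assert (0 < x*x) by (apply Rsqr_pos_lt in h; unfold Rsqr in h; exact h).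
    assert (x*x*(a + Rabs p + Rabs q) < 0) by (apply Ropp_lt_cancel; rewrite Ropp_0, Ropp_mult_distr_r; apply Rmult_lt_0_compat; lra). nra.
  - assert (0 < y*y) by (apply Rsqr_pos_lt in h; unfold Rsqr in h; exact h).
    assert (y*y*(b + Rabs p + Rabs t) < 0) by (apply Ropp_lt_cancel; rewrite Ropp_0, Ropp_mult_distr_r; apply Rmult_lt_0_compat; lra). nra.
  - assert (0 < z*z) by (apply Rsqr_pos_lt in h; unfold Rsqr in h; exact h).
    assert (z*z*(c + Rabs q + Rabs t) < 0) by (apply Ropp_lt_cancel; rewrite Ropp_0, Ropp_mult_distr_r; apply Rmult_lt_0_compat; lra). nra.
Qed.

From Stdlib Require Import FunctionalExtensionality.

Lemma upd_same_f w s : upd w s (w s) = w.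
Proof. apply functional_extensionality; intro r; apply upd_same. Qed.

Definition Ce lij ljk lki w a b := cosh (len lij ljk lki w a b).

Definition JacM (A B C : R) (r s : vtx) : R :=
 match r, s with
 | vi, vi => Jd A B C | vj, vj => Jd B C A | vk, vk => Jd C A B
 | vi, vj | vj, vi => Jo A B C
 | vj, vk | vk, vj => Jo B C A
 | vk, vi | vi, vk => Jo C A B end.

Definition rawJ lij ljk lki w r s :=
  let C1 := Ce lij ljk lki w (nxt r) (prv r) in
  let C2 := Ce lij ljk lki w (prv r) r in
  let C3 := Ce lij ljk lki w r (nxt r) in
  let d1 := (ind (nxt r) s + ind (prv r) s) * (2*(C1+1)) in
  let d2 := (ind (prv r) s + ind r s) * (2*(C2+1)) in
  let d3 := (ind r s + ind (nxt r) s) * (2*(C3+1)) in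
  (d1 + d2 * C3 + C2 * d3 - (C1 + C2 * C3) *
      (C2 * d2 / (C2 * C2 - 1) + C3 * d3 / (C3 * C3 - 1)))
     / sqrt (Dl C1 C2 C3).

Section Main.
Variables (lij ljk lki : R) (w : vtx -> R).
Hypothesis Hw : Wdiamond lij ljk lki w.

Lemma edgeK a b : a <> b -> 1 < exp (w a + w b) * cosh (l0 lij ljk lki a b / 2).
Proof.
  intro hab. set (c := cosh (l0 lij ljk lki a b / 2)).
  assert (Hc : 0 < c) by (unfold c, cosh; pose proof (exp_pos (l0 lij ljk lki a b / 2));
    pose proof (exp_pos (- (l0 lij ljk lki a b / 2))); lra).
  pose proof (Hw a b hab) as H. fold c in H.
  apply exp_increasing in H. rewrite exp_Ropp, exp_ln in H by exact Hc.
  apply (Rmult_lt_compat_r c) in H; auto.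
  rewrite Rinv_l in H; lra.
Qed.

Lemma Cgt1 a b : a <> b -> 1 < Ce lij ljk lki w a b.
Proof. intro h. apply (len_props lij ljk lki w a b (edgeK a b h)). Qed.

Lemma d_theta_r r s :
  is_derive (fun x => theta lij ljk lki (upd w s x) r) (w s) (rawJ lij ljk lki w r s).
Proof.
  assert (n1 : nxt r <> prv r) by (destruct r; discriminate).
  assert (n2 : prv r <> r) by (destruct r; discriminate).
  assert (n3 : r <> nxt r) by (destruct r; discriminate).
  pose proof (len_props lij ljk lki w _ _ (edgeK _ _ n1)) as [a1 _].
  pose proof (len_props lij ljk lki w _ _ (edgeK _ _ n2)) as [a2 [b2 c2]].
  pose proof (len_props lij ljk lki w _ _ (edgeK _ _ n3)) as [a3 [b3 c3]].
  unfold theta. cbv zeta.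
  eapply d_val.
  - eapply (d_theta_gen
      (fun x => cosh (len lij ljk lki (upd w s x) (nxt r) (prv r)))
      (fun x => cosh (len lij ljk lki (upd w s x) (prv r) r))
      (fun x => cosh (len lij ljk lki (upd w s x) r (nxt r)))
      (fun x => sinh (len lij ljk lki (upd w s x) (prv r) r))
      (fun x => sinh (len lij ljk lki (upd w s x) r (nxt r)))).
    + apply d_clen. apply edgeK; auto.
    + apply d_clen. apply edgeK; auto.
    + apply d_clen. apply edgeK; auto.
    + apply d_slen. apply edgeK; auto.
    + apply d_slen. apply edgeK; auto.
    all: cbv beta; rewrite ?upd_same_f; auto.
Qed.

Lemma rawJ_eq r s : rawJ lij ljk lki w r s =
  JacM (Ce lij ljk lki w vj vk) (Ce lij ljk lki w vk vi) (Ce lij ljk lki w vi vj) r s.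
Proof.
  assert (h1 : 1 < Ce lij ljk lki w vj vk) by (apply Cgt1; discriminate).
  assert (h2 : 1 < Ce lij ljk lki w vk vi) by (apply Cgt1; discriminate).
  assert (h3 : 1 < Ce lij ljk lki w vi vj) by (apply Cgt1; discriminate).
  unfold rawJ; destruct r, s; cbv zeta; simpl nxt; simpl prv; simpl JacM;
  first [ apply Gd_eq | apply Gn_eq | apply Gp_eq ]; auto; unfold ind; simpl; ring.
Qed.
End Main.

Theorem lemma2p2 (lij ljk lki : R) (Hij : 0 < lij) (Hjk : 0 < ljk) (Hki : 0 < lki)
  (w : vtx -> R) (Hw : Wdiamond lij ljk lki w) :
  exists Jac : vtx -> vtx -> R,
    (forall r s : vtx,
        is_derive (fun x => theta lij ljk lki (upd w s x) r) (w s) (Jac r s)) /\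
    (forall r s : vtx, Jac r s = Jac s r) /\
    (forall r : vtx,
        Rabs (Jac r r) > Rabs (Jac r (nxt r)) + Rabs (Jac r (prv r))) /\
    (forall x : vtx -> R, (exists r, x r <> 0) ->
        sum3 (fun r => sum3 (fun s => x r * Jac r s * x s)) < 0).
Proof.
  assert (h1 : 1 < Ce lij ljk lki w vj vk) by (apply Cgt1; auto; discriminate).
  assert (h2 : 1 < Ce lij ljk lki w vk vi) by (apply Cgt1; auto; discriminate).
  assert (h3 : 1 < Ce lij ljk lki w vi vj) by (apply Cgt1; auto; discriminate).
  set (A := Ce lij ljk lki w vj vk) in *.
  set (B := Ce lij ljk lki w vk vi) in *.
  set (C := Ce lij ljk lki w vi vj) in *.
  exists (JacM A B C). split; [|split; [|split]].
  - intros r s. eapply d_val; [apply d_theta_r; exact Hw | apply rawJ_eq; exact Hw].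
  - intros r s; destruct r, s; reflexivity.
  - intro r; destruct r; simpl.
    + apply (dom A B C); auto.
    + apply (dom B C A); auto.
    + apply (dom C A B); auto.
  - intros x [r0 hr].
    destruct (dom A B C h1 h2 h3) as [da ea].
    destruct (dom B C A h2 h3 h1) as [db eb].
    destruct (dom C A B h3 h1 h2) as [dc ec].
    rewrite Rabs_left in ea, eb, ec by auto.
    unfold sum3; simpl.
    apply quad; try lra.
    destruct r0; auto.
Qed.
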